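(* Suppose $1<R\le n$ and let $\ell_2=\min\{n,\lfloor n/R\rfloor\}$. Then for every bid set $B_{\mathcal D}$ of $\mathcal D$ (a multiset of $n$ nonnegative reals with sum $\beta$), $$W(\pi_{\rm unif},B_{\mathcal D})\ge f(\ell_2).$$
   Context: Position-randomized auction with two bidders $\mathcal A$ and $\mathcal D$ and $n\ge1$ objects. $\mathcal D$ has budget $\beta>0$ and $\mathcal A$ has budget $R\beta$ with $R>0$. A bidding algorithm of a bidder is a pair $(\pi,B)$: $B$ (the bid set) is a multiset of $n$ nonnegative reals whose sum is at most the bidder's budget, and $\pi$ is a randomized algorithm permuting sequences of length $n$. Applying $\pi$ to a listing of $B$ gives the final bid sequence, whose $i$-th entry is the bid on object $i$. The two bidders' permutations are independent. Each object goes to the higher bid; on a tie each bidder wins it with probability $1/2$. $w(\pi_{\mathcal A},\pi_{\mathcal D},B_{\mathcal A},B_{\mathcal D})$ is the expected number of objects won by $\mathcal A$. $W(\pi_{\mathcal D},B_{\mathcal D})$ is its supremum over all bidding algorithms $(\pi_{\mathcal A},B_{\mathcal A})$ of $\mathcal A$. $\pi_{\rm unif}$ applies a uniformly random permutation. For $x,y>0$, $\mathrm{less}(x,y)=y(\lceil x/y\rceil-1)$. For $\ell=1,\dots,n$, let $R_\ell=\mathrm{less}(R,\frac2{\ell(\ell+1)})$ and $f(\ell)=n-\ell+\frac{\ell(\ell+1)R_\ell}{2n}$. *)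

(* Defs.v *)
From HB Require Import structures.
From mathcomp Require Import all_boot all_order all_algebra all_fingroup.
From mathcomp Require Import classical_sets reals.
Set Implicit Arguments. Unset Strict Implicit. Unset Printing Implicit Defensive.
Import Order.TTheory GRing.Theory Num.Theory.
Local Open Scope ring_scope.
Local Open Scope classical_set_scope.

Section Auction.
Variable RT : realType.

(* Probability that A wins an object on which A bids a and D bids d. *)
Definition win (a d : RT) : RT :=
  if d < a then 1 else if a == d then 1 / 2 else 0.

(* A randomized permuting algorithm: a probability distribution on the
   permutations of the n positions.  Applying permutation s to a listing
   b : 'I_n -> RT gives the final bid sequence i |-> b (s i). *)
Definition is_distr (n : nat) (p : {perm 'I_n} -> RT) : Prop :=
  (forall s, 0 <= p s) /\ \sum_(s : {perm 'I_n}) p s = 1.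

Definition bid_set (n : nat) (budget : RT) (b : 'I_n -> RT) : Prop :=
  (forall i, 0 <= b i) /\ \sum_(i < n) b i <= budget.

Definition pi_unif (n : nat) : {perm 'I_n} -> RT := fun _ => (n`!%:R)^-1.

(* expected number of objects won by A *)
Definition w (n : nat) (pA pD : {perm 'I_n} -> RT) (bA bD : 'I_n -> RT) : RT :=
  \sum_(sA : {perm 'I_n}) \sum_(sD : {perm 'I_n})
     pA sA * pD sD * \sum_(i < n) win (bA (sA i)) (bD (sD i)).

Definition W (n : nat) (rho beta : RT) (pD : {perm 'I_n} -> RT) (bD : 'I_n -> RT) : RT :=
  sup [set x : RT | exists (pA : {perm 'I_n} -> RT) (bA : 'I_n -> RT),
          is_distr pA /\ bid_set (rho * beta) bA /\ x = w pA pD bA bD].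

Definition less (x y : RT) : RT := y * ((Num.ceil (x / y))%:~R - 1).

Definition R_ell (rho : RT) (l : nat) : RT := less rho (2 / (l * l.+1)%:R).

Definition f (n : nat) (rho : RT) (l : nat) : RT :=
  n%:R - l%:R + (l * l.+1)%:R * R_ell rho l / (2 * n%:R).

(* ell_2 = min(n, floor(n / R)) ; floor(n/R) >= 0 here, cast to nat via absz *)
Definition ell2 (n : nat) (rho : RT) : nat :=
  minn n `|Num.floor (n%:R / rho)|%N.

End Auction.

(* Main.v *)
Require Import Defs.
From HB Require Import structures.
From mathcomp Require Import all_boot all_order all_algebra all_fingroup.
From mathcomp Require Import classical_sets reals.
From mathcomp Require Import ring lra zify.
Import Order.TTheory GRing.Theory Num.Theory.
Local Open Scope ring_scope.

Lemma sum_perm_at (RT : realType) n (F : 'I_n.+1 -> RT) (i : 'I_n.+1) :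
  \sum_(s : {perm 'I_n.+1}) F (s i) = (n`!)%:R * \sum_j F j.
Proof.
have H k : \sum_(s : {perm 'I_n.+1}) F (s i) = \sum_(s : {perm 'I_n.+1}) F (s k).
  rewrite (reindex_inj (mulgI (tperm i k))) /=.
  by apply: eq_bigr => s _; rewrite permM tpermL.
have E : (n.+1)%:R * \sum_(s : {perm 'I_n.+1}) F (s i) =
         (n.+1)%:R * ((n`!)%:R * \sum_j F j).
  have -> : n.+1%:R * \sum_(s : {perm 'I_n.+1}) F (s i) =
     \sum_(k : 'I_n.+1) \sum_(s : {perm 'I_n.+1}) F (s i).
    by rewrite sumr_const card_ord mulr_natl.
  rewrite (eq_bigr (fun k => \sum_(s : {perm 'I_n.+1}) F (s k))); last by move=> k _; rewrite (H k).
  rewrite exchange_big /=.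
  rewrite (eq_bigr (fun _ => \sum_j F j)); last first.
    by move=> s _; rewrite [RHS](reindex_inj (@perm_inj _ s)).
  by rewrite sumr_const card_Sn factS mulrA -natrM mulr_natl.
apply: (mulfI _ E); by rewrite pnatr_eq0.
Qed.


Definition pt (n : nat) (RT : realType) : {perm 'I_n} -> RT := fun s => (s == 1%g)%:R.

Lemma w_pt (RT : realType) n (bA bD : 'I_n.+1 -> RT) :
  w (pt n.+1 RT) (@pi_unif RT n.+1) bA bD =
  (n.+1)%:R^-1 * \sum_i \sum_j win (bA i) (bD j).
Proof.
rewrite /w (bigD1 1%g) //= [X in _ + X]big1 ?addr0; last first.
  by move=> s hs; rewrite big1 // => t _; rewrite /pt (negbTE hs) !mul0r.
rewrite /pt eqxx.
rewrite /pi_unif (_ : true%:R = 1 :> RT) //.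
rewrite (eq_bigr (fun sD : {perm 'I_n.+1} => ((n.+1)`!%:R)^-1 * \sum_i win (bA i) (bD (sD i)))); last first.
  by move=> s _; rewrite mul1r; under eq_bigr do rewrite perm1.
rewrite -mulr_sumr exchange_big /=.
under eq_bigr => i _ do rewrite (@sum_perm_at RT n (fun j => win (bA i) (bD j)) i).
rewrite -mulr_sumr mulrA factS natrM invfM -(mulrA _ _^-1) mulVf ?mulr1 //.
by rewrite pnatr_eq0 -lt0n fact_gt0.
Qed.


Lemma win_ge0 (RT : realType) (a d : RT) : 0 <= win a d.
Proof. rewrite /win; case: ifP => _ //; case: ifP => _ //; lra. Qed.

Lemma win_le1 (RT : realType) (a d : RT) : win a d <= 1.
Proof. rewrite /win; case: ifP => _ //; case: ifP => _ //; lra. Qed.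

Lemma W_ge (RT : realType) n (rho beta : RT) (bA bD : 'I_n.+1 -> RT) :
  bid_set (rho * beta) bA ->
  w (pt n.+1 RT) (@pi_unif RT n.+1) bA bD <= W rho beta (@pi_unif RT n.+1) bD.
Proof.
move=> hb.
have hub : has_ubound [set x : RT | exists (pA : {perm 'I_n.+1} -> RT) (bA : 'I_n.+1 -> RT),
          is_distr pA /\ bid_set (rho * beta) bA /\ x = w pA (@pi_unif RT n.+1) bA bD].
  exists (n.+1)%:R => x [pA [bA' [[hp0 hp1] [_ ->]]]].
  rewrite /w.
  apply: (@le_trans _ _ (\sum_(sA : {perm 'I_n.+1}) \sum_(sD : {perm 'I_n.+1}) pA sA * pi_unif RT sD * (n.+1)%:R)).
    apply: ler_sum => sA _; apply: ler_sum => sD _.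
    apply: ler_wpM2l; first by apply: mulr_ge0 => //; rewrite /pi_unif invr_ge0 ler0n.
    apply: (@le_trans _ _ (\sum_(i < n.+1) (1 : RT))); first by apply: ler_sum => i _; apply: win_le1.
    by rewrite sumr_const card_ord.
  have hpi : \sum_(sD : {perm 'I_n.+1}) pi_unif RT sD = 1.
    rewrite /pi_unif sumr_const card_Sn -[_ *+ _]mulr_natr mulVf //.
    by rewrite pnatr_eq0 -lt0n fact_gt0.
  rewrite (eq_bigr (fun sA => pA sA * (n.+1)%:R)); last first.
    by move=> sA _; rewrite -mulr_suml -mulr_sumr hpi mulr1.
  by rewrite -mulr_suml hp1 mul1r.
apply: (ub_le_sup hub).
exists (pt n.+1 RT), bA; split; last by split.
split; first by move=> s; rewrite /pt ler0n.
rewrite (bigD1 1%g) //= big1 ?addr0; first by rewrite /pt eqxx.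
by move=> s hs; rewrite /pt (negbTE hs).
Qed.


Lemma choose_U (RT : realType) l (e d : 'I_l -> RT) (k : nat) :
  (forall t, 0 <= e t) -> (forall t, 0 < d t <= 1) -> k%:R < \sum_t d t ->
  exists U : {set 'I_l}, #|U| = k /\ \sum_(t in U) e t <= \sum_t e t * d t /\
     ((exists t, 0 < e t) -> \sum_(t in U) e t < \sum_t e t * d t).
Proof.
move=> he hd hk.
have hkl : (k < l)%N.
  have : \sum_(t < l) d t <= l%:R.
    rewrite -[l in l%:R]card_ord -sumr_const; apply: ler_sum => t _.
    by case/andP: (hd t).
  move=> hle; have := lt_le_trans hk hle; rewrite ltr_nat //.
have hkl' : (k <= l)%N by apply: ltnW.
pose U1 : {set 'I_l} := [set widen_ord hkl' j | j : 'I_k].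
have hU1 : #|U1| == k.
  by rewrite card_imset ?card_ord //; by move=> x y /(congr1 val) /= /val_inj.
pose U0 := [arg min_(U < U1 | #|U| == k) \sum_(t in U) e t]%O.
have [hU0 hmin] : #|U0| == k /\ forall U : {set 'I_l}, #|U| == k -> \sum_(t in U0) e t <= \sum_(t in U) e t.
  rewrite /U0; case: arg_minP => // U hU hm; split => // V hV; exact: hm.
have hex : forall j j', j \in U0 -> j' \notin U0 -> e j <= e j'.
  move=> j j' hj hj'.
  have hj'D : j' \notin U0 :\ j by rewrite in_setD1 (negbTE hj') andbF.
  have := hmin (j' |: (U0 :\ j)).
  rewrite cardsU1 hj'D /=.
  have := cardsD1 j U0; rewrite hj /= => hc.
  rewrite (eqP hU0) in hc; rewrite hc add1n eqxx => /(_ isT).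
  rewrite big_setU1 //= (big_setD1 j hj) /=. lra.
have [t0 ht0] : exists t0, t0 \notin U0.
  case: (pickP (fun t => t \notin U0)) => [t0 ht0|hnone]; first by exists t0.
  have h0 : #|~: U0| = 0%N by apply: eq_card0 => t; rewrite inE; exact: hnone t.
  have := cardsC U0; rewrite h0 addn0 card_ord (eqP hU0) => hlk.
  by move: hkl; rewrite hlk ltnn.
pose j2 := [arg min_(t < t0 | t \notin U0) e t]%O.
have [hj2 hj2m] : j2 \notin U0 /\ forall t, t \notin U0 -> e j2 <= e t.
  rewrite /j2; case: arg_minP => // t ht hm; split => // u hu; exact: hm.
set M := e j2.
have hM0 : 0 <= M by apply: he.
have hin : forall t, t \in U0 -> e t <= M by move=> t ht; apply: hex.
have key : M * (\sum_t d t - k%:R) <= \sum_t e t * d t - \sum_(t in U0) e t.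
  have -> : k%:R = \sum_t (if t \in U0 then 1 else 0 : RT).
    by rewrite -big_mkcond /= sumr_const (eqP hU0).
  rewrite [X in _ <= _ - X]big_mkcond /= -!sumrB mulr_sumr; apply: ler_sum => t _.
  have := hd t; have := he t.
  case: ifP => ht.
    have := hin t ht; move=> h1 h2 /andP [h3 h4]. nra.
  have := hj2m t (negbT ht); move=> h1 h2 /andP [h3 h4]. rewrite /M; nra.
have hpos : 0 <= \sum_t d t - k%:R by lra.
exists U0; split; first by apply/eqP.
split.
  have := mulr_ge0 hM0 hpos; lra.
move=> [t1 ht1].
have hk' : 0 < \sum_t d t - k%:R by lra.
case: (ltrP 0 M) => hM.
  have := mulr_gt0 hM hk'; lra.
have -> : \sum_(t in U0) e t = 0.
  by apply: big1 => t ht; apply/eqP; rewrite eq_le he (le_trans (hin t ht) hM).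
rewrite (bigD1 t1) //=.
have h1 : 0 < e t1 * d t1 by apply: mulr_gt0 => //; case/andP: (hd t1).
have h2 : 0 <= \sum_(i | i != t1) e i * d i.
  apply: sumr_ge0 => i _; apply: mulr_ge0 => //; case/andP: (hd i) => /ltW //.
lra.
Qed.


Lemma cnt_lt n c : (c <= n)%N -> (\sum_(i < n) (i < c) = c)%N.
Proof.
move=> hc.
rewrite -(big_mkord xpredT (fun i => (i < c) : nat)) (big_cat_nat (leq0n c) hc) /=.
rewrite [X in (_ + X)%N]big_nat_cond [X in (_ + X)%N]big1 ?addn0; last first.
  by move=> i /andP [/andP [h1 _] _]; rewrite ltnNge h1.
rewrite big_nat_cond (eq_bigr (fun _ => 1%N)); last by move=> i /andP [/andP [_ ->] _].
by rewrite -big_nat_cond sum_nat_const_nat subn0 muln1.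
Qed.

Lemma cnt_ge n c : (c <= n)%N -> (\sum_(i < n) (c <= i) = n - c)%N.
Proof.
move=> hc.
have : (\sum_(i < n) (i < c) + \sum_(i < n) (c <= i) = n)%N.
  rewrite -big_split /= -[n in RHS]card_ord -sum1_card.
  by apply: eq_bigr => i _; case: (ltnP i c).
rewrite cnt_lt //; lia.
Qed.

Lemma tele (RT : realType) (b : nat -> RT) m L : (L <= m)%N ->
  b L = b m + \sum_(t < m) (if (L <= t)%N then b t - b t.+1 else 0).
Proof.
elim: m => [|m IH] hL.
  by move: hL; rewrite leqn0 => /eqP ->; rewrite big_ord0 addr0.
case: (ltnP m L) => h.
  have -> : L = m.+1 by apply/eqP; rewrite eqn_leq hL h.
  rewrite big1 ?addr0 // => t _; by rewrite leqNgt ltn_ord.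
rewrite big_ord_recr /= h IH //.
rewrite (eq_bigr (fun t : 'I_m => if (L <= t)%N then b t - b t.+1 else 0)) //.
lra.
Qed.

Lemma abel (RT : realType) (b : nat -> RT) m :
  \sum_(k < m.+1) b k = \sum_(t < m) (t.+1)%:R * (b t - b t.+1) + (m.+1)%:R * b m.
Proof.
elim: m => [|m IH]; first by rewrite big_ord1 big_ord0 add0r mul1r.
rewrite big_ord_recr /= IH [in RHS]big_ord_recr /=.
set S := \sum_(t < m) _.
rewrite -[m.+2%:R]natr1.
set x := m.+1%:R; ring.
Qed.

Lemma tri (RT : realType) l : (\sum_(t < l) (t.+1)%:R : RT) * 2 = (l * l.+1)%:R.
Proof.
elim: l => [|l IH]; first by rewrite big_ord0 mul0r.
rewrite big_ord_recr /= mulrDl IH -!natrM -natrD; congr (_%:R); lia.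
Qed.


Lemma ell_facts (RT : realType) n (rho : RT) : (0 < n)%N -> 1 < rho -> rho <= n%:R ->
  (0 < ell2 n rho)%N /\ (ell2 n rho < n)%N /\
  rho * (ell2 n rho)%:R <= n%:R /\ n%:R < rho * (ell2 n rho).+1%:R.
Proof.
move=> hn h1 hrn.
have hr0 : 0 < rho by lra.
set z := Num.floor (n%:R / rho).
have hz1 : 1 <= z.
  rewrite /z floor_ge_int /= ler_pdivlMr //; lra.
have hzle : z%:~R <= n%:R / rho := floor_le _.
have hzlt : n%:R / rho < (z + 1)%:~R := floorD1_gt _.
have habs : (`|z|%N)%:R = z%:~R :> RT by rewrite natr_absz ger0_norm //; lia.
have hnr : n%:R / rho < n%:R.
  rewrite ltr_pdivrMr // -{1}(mulr1 n%:R) ltr_pM2l //; rewrite ltr0n //.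
have hzn : (`|z|%N < n)%N by rewrite -(ltr_nat RT) habs; lra.
have -> : ell2 n rho = `|z|%N by rewrite /ell2 (minn_idPr (ltnW hzn)).
have hz1' : (1 : RT) <= z%:~R by rewrite ler1z.
split; first by rewrite -(ltr_nat RT) habs; lra.
split=> //.
rewrite -addn1 natrD habs; split.
  by rewrite -ler_pdivlMl // mulrC.
move: hzlt; rewrite intrD /= ltr_pdivrMr // mulrC //.
Qed.

Lemma fval (RT : realType) n (rho : RT) l : (0 < n)%N -> (0 < l)%N ->
  n%:R * f n rho l = n%:R * (n%:R - l%:R) + ((Num.ceil (rho * (l * l.+1)%:R / 2))%:~R - 1).
Proof.
move=> hn hl.
have hP : (l * l.+1)%:R != 0 :> RT by rewrite pnatr_eq0 muln_eq0 negb_or -!lt0n hl.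
have hl0 : l%:R != 0 :> RT by rewrite pnatr_eq0 -lt0n.
have hl1 : 1 + l%:R != 0 :> RT by rewrite -[1 + _](natrD RT 1 l) pnatr_eq0.
have hN : n%:R != 0 :> RT by rewrite pnatr_eq0 -lt0n.
rewrite /f /R_ell /less.
have -> : rho / (2 / (l * l.+1)%:R) = rho * (l * l.+1)%:R / 2.
  by field; rewrite hl0 hl1.
set c := Num.ceil _.
field; by rewrite hl0 hl1 hN.
Qed.

Definition hh {RT : realType} (rho : RT) (t : nat) : nat :=
  (`|Num.ceil (rho * t.+1%:R)|%N).-1.

Lemma hh_val (RT : realType) (rho : RT) t : 0 < rho ->
  (hh rho t)%:R = (Num.ceil (rho * t.+1%:R))%:~R - 1 :> RT.
Proof.
move=> hr.
have hc : 0 < Num.ceil (rho * t.+1%:R) by rewrite ceil_gt0 mulr_gt0 // ltr0n.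
have hpos : (0 < `|Num.ceil (rho * t.+1%:R)|%N)%N by rewrite absz_gt0 gt_eqF.
rewrite /hh -subn1 (natrB _ hpos) natr_absz gtr0_norm //.
Qed.

Lemma d_bounds (RT : realType) (rho : RT) t : 0 < rho ->
  0 < rho * t.+1%:R - (hh rho t)%:R <= 1.
Proof.
move=> hr; rewrite hh_val //.
have := ceil_itv (rho * t.+1%:R); rewrite intrB /= => /andP [h1 h2].
apply/andP; split; lra.
Qed.

Lemma hh_lt (RT : realType) (rho : RT) s t : 1 < rho -> (s < t)%N -> (hh rho s < hh rho t)%N.
Proof.
move=> hr hst.
have hr0 : 0 < rho by lra.
rewrite -(ltr_nat RT) !hh_val //.
have := ceil_itv (rho * s.+1%:R); rewrite intrB /= => /andP [h1 h2].
have := ceil_itv (rho * t.+1%:R); rewrite intrB /= => /andP [h3 h4].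
have : (s.+2 <= t.+1)%N by [].
rewrite -(ler_nat RT) => hst'.
have : rho * s.+2%:R <= rho * t.+1%:R by rewrite ler_pM2l.
rewrite -addn1 natrD mulrDr mulr1; lra.
Qed.

Lemma hh_le (RT : realType) (rho : RT) n l t : 0 < rho -> rho * l%:R <= n%:R -> (t < l)%N ->
  (hh rho t < n)%N.
Proof.
move=> hr hl ht.
rewrite -(ltr_nat RT) hh_val //.
have := ceil_itv (rho * t.+1%:R); rewrite intrB /= => /andP [h1 h2].
have : rho * t.+1%:R <= rho * l%:R by rewrite ler_pM2l // ler_nat.
lra.
Qed.


Lemma core (RT : realType) n (b : nat -> RT) (rho beta : RT) :
  (0 < n)%N -> 1 < rho -> rho <= n%:R ->
  (forall i j, (i <= j)%N -> b j <= b i) -> (forall i, 0 <= b i) ->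
  \sum_(k < n) b k = beta -> 0 < beta ->
  exists a : 'I_n -> RT, (forall i, 0 <= a i) /\ \sum_i a i <= rho * beta /\
     n%:R * f n rho (ell2 n rho) <= \sum_i \sum_(k < n) win (a i) (b k).
Proof.
move=> hn h1 hrn hmon hb0 hsum hbeta.
have [hl0 [hln [hrl hnl]]] := @ell_facts RT n rho hn h1 hrn.
rewrite (@fval RT n rho _ hn hl0).
set l := ell2 n rho in hl0 hln hrl hnl *.
set T := rho * (l * l.+1)%:R / 2.
have hr0 : 0 < rho by lra.
pose e t := b t - b t.+1.
have he : forall t, 0 <= e t by move=> t; rewrite /e subr_ge0; apply: hmon; exact: leqnSn.
pose d (t : 'I_l) := rho * (t.+1)%:R - (hh rho t)%:R.
have hd : forall t, 0 < d t <= 1 by move=> t; apply: d_bounds.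
pose H := (\sum_(t < l) hh rho t)%N.
have hsd : \sum_t d t = T - H%:R.
  rewrite /d sumrB -mulr_sumr /H natr_sum; congr (_ - _).
  by rewrite /T -(tri RT l); field.
have hsd0 : 0 < \sum_t d t.
  rewrite (bigD1 (Ordinal hl0)) //=.
  have := hd (Ordinal hl0) => /andP [hp _].
  have : 0 <= \sum_(i < l | i != Ordinal hl0) d i.
    by apply: sumr_ge0 => i _; case/andP: (hd i) => /ltW.
  lra.
pose K := Num.ceil T - 1 - H%:Z.
have hK0 : 0 <= K.
  have : (H%:Z < Num.ceil T) by rewrite ceil_gt_int; lra.
  rewrite /K; lia.
pose k := `|K|%N.
have hkR : k%:R = (Num.ceil T)%:~R - 1 - H%:R :> RT.
  by rewrite natr_absz ger0_norm // /K !intrB.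
have hk : k%:R < \sum_t d t.
  rewrite hkR hsd; have := ceilB1_lt T; rewrite intrB /=; lra.
have [U [hU [hUle hUlt]]] := @choose_U RT l (fun t : 'I_l => e t) d k (fun t => he t) hd hk.
pose C (t : 'I_l) : nat := (hh rho t + (t \in U))%N.
have hCn : forall t, (C t <= n)%N.
  move=> t; have := @hh_le RT rho n l t hr0 hrl (ltn_ord t); rewrite /C.
  by case: (t \in U) => /=; lia.
have hCmono : forall s t : 'I_l, (s <= t)%N -> (C s <= C t)%N.
  move=> s t hst; case: (ltngtP s t) => h.
  - have := @hh_lt RT rho s t h1 h; rewrite /C.
    by case: (s \in U); case: (t \in U) => /=; lia.
  - by move: hst; rewrite leqNgt h.
  - by have -> : s = t by apply: val_inj.
pose L (i : nat) : nat := (\sum_(t < l) (C t <= i))%N.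
have hLl : forall i, (L i <= l)%N.
  move=> i; apply: (@leq_trans (\sum_(t < l) 1)%N).
    by apply: leq_sum => t _; case: (C t <= i)%N.
  by rewrite sum_nat_const card_ord muln1.
have hLC : forall i (t : 'I_l), (L i <= t)%N -> (i < C t)%N.
  move=> i t; apply: contraTT; rewrite -leqNgt -ltnNge => hCi.
  rewrite /L -(@cnt_lt l t.+1 (ltn_ord t)).
  apply: leq_sum => s _; case: (ltnP s t.+1) => //= hs.
  by rewrite (leq_trans (hCmono s t hs) hCi).
have hsumL : (\sum_(i < n) L i = \sum_(t < l) (n - C t))%N.
  by rewrite /L exchange_big /=; apply: eq_bigr => t _; apply: cnt_ge (hCn t).
have hcnt : forall t : 'I_l, (\sum_(i < n) (L i <= t) <= C t)%N.
  move=> t; apply: (@leq_trans (\sum_(i < n) (i < C t))%N); last by rewrite cnt_lt.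
  by apply: leq_sum => i _; case: (leqP (L i) t) => //= h; rewrite (hLC _ _ h).
have hcost : \sum_(i < n) b (L i) <= n%:R * b l + \sum_(t < l) e t * (C t)%:R.
  rewrite (eq_bigr (fun i : 'I_n => b l + \sum_(t < l) (if (L i <= t)%N then b t - b t.+1 else 0)));
    last by move=> i _; apply: tele.
  rewrite big_split /= sumr_const card_ord; apply: lerD; first by rewrite mulr_natl.
  rewrite exchange_big /=; apply: ler_sum => t _.
  have -> : \sum_(i < n) (if (L i <= t)%N then b t - b t.+1 else 0) =
            e t * (\sum_(i < n) (L i <= t)%N)%:R.
    rewrite natr_sum mulr_sumr; apply: eq_bigr => i _.
    by case: (L i <= t)%N; rewrite ?mulr1 ?mulr0.
  by rewrite ler_wpM2l // ler_nat; exact: hcnt t.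
have hbl : \sum_(k < l.+1) b k <= beta.
  rewrite -hsum (big_ord_widen n b hln) /=.
  rewrite [X in _ <= X](bigID (fun i : 'I_n => (i < l.+1)%N)) /=.
  have : 0 <= \sum_(i < n | ~~ (i < l.+1)%N) b i by apply: sumr_ge0.
  lra.
rewrite abel in hbl.
have hCsum : \sum_(t < l) e t * (C t)%:R =
    \sum_(t < l) e t * (hh rho t)%:R + \sum_(t in U) e t.
  rewrite [X in _ = _ + X]big_mkcond /= -big_split /=; apply: eq_bigr => t _.
  by rewrite /C natrD mulrDr; case: (t \in U); rewrite ?mulr1 ?mulr0.
have hdsum : \sum_(t < l) e t * d t =
    rho * \sum_(t < l) (t.+1)%:R * (b t - b t.+1) - \sum_(t < l) e t * (hh rho t)%:R.
  rewrite mulr_sumr -sumrB; apply: eq_bigr => t _; rewrite /d /e; ring.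
have hslack : \sum_(i < n) b (L i) < rho * beta.
  set A := \sum_(t < l) (t.+1)%:R * (b t - b t.+1) in hbl hdsum.
  set B := b l in hcost hbl.
  set Eh := \sum_(t < l) e t * (hh rho t)%:R in hCsum hdsum.
  set Ed := \sum_(t < l) e t * d t in hdsum hUle hUlt.
  set EU := \sum_(t in U) e t in hCsum hUle hUlt.
  rewrite hCsum in hcost.
  have hB0 : 0 <= B by apply: hb0.
  have hrb : rho * (A + (l.+1)%:R * B) <= rho * beta by rewrite ler_pM2l.
  have hPn : 0 < rho * (l.+1)%:R - n%:R by lra.
  have hPB : 0 <= (rho * (l.+1)%:R - n%:R) * B by apply: mulr_ge0 => //; lra.
  case: (ltrP 0 B) => hBp.
    have hPB' : 0 < (rho * (l.+1)%:R - n%:R) * B by apply: mulr_gt0.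
    have hE : EU <= Ed := hUle.
    have E1 : rho * (A + (l.+1)%:R * B) = rho * A + (rho * (l.+1)%:R) * B by ring.
    have E2 : (rho * (l.+1)%:R - n%:R) * B = (rho * (l.+1)%:R) * B - n%:R * B by ring.
    lra.
  have hB : B = 0 by apply/eqP; rewrite eq_le hBp hB0.
  have hex : exists t : 'I_l, 0 < e t.
    case: (boolP [exists t : 'I_l, 0 < e t]) => [/existsP [t ht] | /existsPn nex]; first by exists t.
    exfalso.
    have hb00 : 0 < b 0%N.
      rewrite ltNge; apply/negP => hle.
      have : beta <= 0.
        rewrite -hsum; apply: (@le_trans _ _ (\sum_(j < n) (0 : RT))); last by rewrite big1.
        by apply: ler_sum => j _; apply: (le_trans (hmon 0%N j (leq0n j)) hle).
      lra.
    have := @tele RT b l 0%N (leq0n l).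
    rewrite (eq_bigr (fun t : 'I_l => e t)) //.
    have : \sum_(t < l) e t <= 0.
      apply: (@le_trans _ _ (\sum_(t < l) (0 : RT))); last by rewrite big1.
      apply: ler_sum => t _.
      by have := nex t; rewrite -leNgt.
    rewrite -/B hB; lra.
  have hlt := hUlt hex.
  have E1 : rho * (A + (l.+1)%:R * B) = rho * A + (rho * (l.+1)%:R) * B by ring.
  rewrite hB in E1 hcost hrb.
  lra.
have hnR : 0 < n%:R :> RT by rewrite ltr0n.
pose eps := (rho * beta - \sum_(i < n) b (L i)) / n%:R.
have heps : 0 < eps by apply: divr_gt0 => //; lra.
exists (fun i : 'I_n => b (L i) + eps).
split; first by move=> i; apply: addr_ge0 => //; apply: ltW.
split.
  rewrite big_split /= sumr_const card_ord -mulr_natr /eps.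
  have -> : (rho * beta - \sum_(i < n) b (L i)) / n%:R * n%:R = rho * beta - \sum_(i < n) b (L i).
    by field; rewrite pnatr_eq0 -lt0n.
  lra.
have hLn : forall i, (L i <= n)%N by move=> i; apply: (leq_trans (hLl i)); apply: ltnW.
have hwin : forall i : 'I_n, ((n - L i)%N)%:R <= \sum_(j < n) win (b (L i) + eps) (b j).
  move=> i.
  rewrite -(big_mkord xpredT (fun j => win (b (L i) + eps) (b j))).
  rewrite (big_cat_nat (leq0n (L i)) (hLn i)) /=.
  have h0 : 0 <= \sum_(0 <= j < L i) win (b (L i) + eps) (b j).
    by apply: sumr_ge0 => j _; apply: win_ge0.
  have -> : \sum_(L i <= j < n) win (b (L i) + eps) (b j) = \sum_(L i <= j < n) (1 : RT).
    rewrite big_nat_cond [RHS]big_nat_cond; apply: eq_bigr => j /andP [/andP [hj _] _].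
    rewrite /win ifT //; have := hmon _ _ hj; lra.
  rewrite sumr_const_nat; lra.
apply: (@le_trans _ _ (\sum_(i < n) ((n - L i)%N)%:R)); last by apply: ler_sum => i _; apply: hwin.
rewrite -natr_sum.
set V := (\sum_(i < n) (n - L i))%N.
have E1 : (V + \sum_(i < n) L i = n * n)%N.
  rewrite /V -big_split /=.
  rewrite (eq_bigr (fun _ => n)); last by move=> i _; rewrite subnK.
  by rewrite sum_nat_const card_ord.
have E2 : (\sum_(t < l) (n - C t) + \sum_(t < l) C t = l * n)%N.
  rewrite -big_split /=.
  rewrite (eq_bigr (fun _ => n)); last by move=> t _; rewrite subnK.
  by rewrite sum_nat_const card_ord.
have E3 : (\sum_(t < l) C t = H + k)%N.
  rewrite /C big_split /=; congr (_ + _)%N.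
  by rewrite -hU -sum1_card [RHS]big_mkcond /=; apply: eq_bigr => t _; case: (t \in U).
rewrite hsumL E3 in E1 E2.
have R1 := congr1 (fun x => x%:R : RT) E1.
have R2 := congr1 (fun x => x%:R : RT) E2.
rewrite /= !natrD !natrM in R1 R2.
rewrite hkR in R1 R2.
set SC := (\sum_(t < l) (n - C t))%N in R1 R2.
lra.
Qed.


Theorem lemma7 (RT : realType) (n : nat) (beta rho : RT) (bD : 'I_n -> RT) :
  (0 < n)%N -> 0 < beta -> 1 < rho -> rho <= n%:R ->
  (forall i, 0 <= bD i) -> \sum_(i < n) bD i = beta ->
  f n rho (ell2 n rho) <= W rho beta (@pi_unif RT n) bD.
Proof.
case: n bD => [//|n] bD _ hbeta h1 hrn hbD hsum.
pose vs := sort (fun x y : RT => y <= x) [seq bD i | i <- enum 'I_n.+1].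
pose b k := nth 0 vs k.
have hsz : size vs = n.+1 by rewrite size_sort size_map size_enum_ord.
have hperm : forall F : RT -> RT, \sum_(j < n.+1) F (bD j) = \sum_(k < n.+1) F (b k).
  move=> F.
  have -> : \sum_(k < n.+1) F (b k) = \sum_(x <- vs) F x by rewrite [RHS](big_nth 0) hsz big_mkord.
  rewrite (perm_big _ (permEl (perm_sort _ _))) big_map big_enum /=.
  by apply: eq_bigl => i.
have hall : all (fun x => 0 <= x) vs.
  by rewrite all_sort; apply/allP => x /mapP [i _ ->].
have hb0 : forall k, 0 <= b k.
  move=> k; rewrite /b; case: (ltnP k (size vs)) => hk.
    by apply: (allP hall); apply: mem_nth.
  by rewrite nth_default.
have hsorted : sorted (fun x y : RT => y <= x) vs.
  by apply: sort_sorted => x y; apply: le_total.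
have hmon : forall i j, (i <= j)%N -> b j <= b i.
  move=> i j hij; case: (ltnP j (size vs)) => hj.
    have hi : (i < size vs)%N by apply: (leq_ltn_trans hij).
    have Tr : transitive (fun x y : RT => y <= x).
      by move=> x y z hyx hzy; apply: (le_trans hzy hyx).
    have Rf : reflexive (fun x y : RT => y <= x) by move=> x /=.
    exact: (sorted_leq_nth Tr Rf 0 hsorted i j hi hj hij).
  by rewrite /b (nth_default 0 hj).
have hsumb : \sum_(k < n.+1) b k = beta by rewrite -hsum (hperm id).
have [a [ha0 [hasum hval]]] := @core RT n.+1 b rho beta (ltn0Sn n) h1 hrn hmon hb0 hsumb hbeta.
apply: (le_trans _ (@W_ge RT n rho beta a bD (conj ha0 hasum))).
rewrite w_pt.
under eq_bigr => i _ do rewrite (hperm (fun x => win (a i) x)).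
have hnR : 0 < n.+1%:R :> RT by rewrite ltr0n.
rewrite -(ler_pM2l hnR) mulrA mulfV ?mul1r //; last by rewrite gt_eqF.
Qed.
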